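(* Let $\sigma\in S_t$ and $p\in S_k$, and let $m=\min(t,k)$. If $\mathrm{red}(p_1p_2\cdots p_m)\neq\mathrm{red}(\sigma_1\sigma_2\cdots\sigma_m)$, then the set $\{1\}$ is reversibly deletable for $p$ with respect to $\{(\sigma,[t-1])\}$.
   Context: Notation: $\mathrm{red}(w)$ replaces the $i$-th smallest letter of a word $w$ of distinct integers by $i$. A vincular pattern of length $\ell$ is $(\sigma,X)$ with $\sigma\in S_\ell$, $X\subseteq[\ell-1]$; $\pi\in S_n$ contains it if there are $i_1<\dots<i_\ell$ with $\mathrm{red}(\pi_{i_1}\cdots\pi_{i_\ell})=\sigma$ and $i_{x+1}=i_x+1$ for all $x\in X$; $(\sigma,[t-1])$ for $\sigma\in S_t$ is the consecutive pattern $\sigma$. For $p\in S_k$ and $w\in[n]^k$ with distinct letters and $\mathrm{red}(w)=p$, $S_n^B(p;w)$ is the set of $\pi\in S_n$ avoiding every pattern in $B$ with $\pi_i=w_i$ for $i\le k$. For a set of indices $R$, $d_R(\pi)$ is obtained from $\pi$ by deleting the letters in positions in $R$ and reducing; for a word $w$ with distinct letters, $d_R(w)$ deletes $w_r$ ($r\in R$) and subtracts from each remaining $w_i$ the number of $r\in R$ with $w_r<w_i$. A set $R\subseteq[k]$ is reversibly deletable for $p$ with respect to $B$ if for every $n$ and every such $w$ with $S_n^B(p;w)\neq\emptyset$, the map $d_R$ restricts to a bijection $S_n^B(p;w)\to S_{n-|R|}^B(d_R(p);d_R(w))$. *)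

(* Defs.v *)
(* Permutations and words are represented as seq nat
   with letters 1..n; positions are 1-indexed in the paper. *)
From mathcomp Require Import all_boot.
Set Implicit Arguments. Unset Strict Implicit. Unset Printing Implicit Defensive.

Definition red (w : seq nat) : seq nat :=
  [seq (count (fun y => y < x) w).+1 | x <- w].

Definition is_perm (n : nat) (s : seq nat) : bool := perm_eq s (iota 1 n).

(* A vincular pattern (sigma, X): sigma in S_l, X a subset of [l-1]. *)
Definition vpattern := (seq nat * seq nat)%type.

(* pi contains (sigma, X): there are positions i_1 < ... < i_l (here stored
   0-indexed in the list I) with red(pi_{i_1} ... pi_{i_l}) = sigma and
   i_{x+1} = i_x + 1 for every x in X. *)
Definition contains (pi : seq nat) (pat : vpattern) : Prop :=
  exists I : seq nat,
    [/\ size I = size pat.1,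
        sorted ltn I,
        all (fun i => i < size pi) I,
        red [seq nth 0 pi i | i <- I] = pat.1 &
        forall x, x \in pat.2 -> nth 0 I x = (nth 0 I x.-1).+1].

Definition avoids (B : seq vpattern) (pi : seq nat) : Prop :=
  forall pat, pat \in B -> ~ contains pi pat.

Definition inS (n : nat) (B : seq vpattern) (p w : seq nat) (pi : seq nat) : Prop :=
  [/\ is_perm n pi, avoids B pi &
      forall i, 1 <= i <= size p -> nth 0 pi i.-1 = nth 0 w i.-1].

Definition del_pos (R : seq nat) (s : seq nat) : seq nat :=
  mask [seq i.+1 \notin R | i <- iota 0 (size s)] s.

Definition dR (R : seq nat) (pi : seq nat) : seq nat := red (del_pos R pi).

Definition dRw (R : seq nat) (w : seq nat) : seq nat :=
  [seq x - count (fun r => nth 0 w r.-1 < x) R | x <- del_pos R w].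

Definition rev_deletable (B : seq vpattern) (p : seq nat) (R : seq nat) : Prop :=
  uniq R /\ all (fun r => 1 <= r <= size p) R /\
  forall (n : nat) (w : seq nat),
    size w = size p -> uniq w -> all (fun x => 1 <= x <= n) w -> red w = p ->
    (exists pi, inS n B p w pi) ->
    [/\ (forall pi, inS n B p w pi ->
           inS (n - size R) B (dR R p) (dRw R w) (dR R pi)),
        (forall pi1 pi2, inS n B p w pi1 -> inS n B p w pi2 ->
           dR R pi1 = dR R pi2 -> pi1 = pi2) &
        (forall tau, inS (n - size R) B (dR R p) (dRw R w) tau ->
           exists2 pi, inS n B p w pi & dR R pi = tau)].

(* Main.v *)
Require Import Defs.
From mathcomp Require Import all_boot zify.
Set Implicit Arguments. Unset Strict Implicit. Unset Printing Implicit Defensive.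

Lemma count_lt (a1 a2 : pred nat) s z :
  (forall y, a1 y -> a2 y) -> z \in s -> a2 z -> ~~ a1 z -> count a1 s < count a2 s.
Proof.
move=> H; elim: s => [//|y s IH]; rewrite inE => /orP[/eqP->|zs] a2z a1z /=.
  rewrite (negbTE a1z) a2z add0n add1n ltnS; exact: sub_count.
have := IH zs a2z a1z; case: (a1 y) (H y) => [->//|_]; case: (a2 y) => /=; lia.
Qed.

Definition gr (s : seq nat) x := (count (fun y => y < x) s).+1.

Lemma red_gr s : red s = map (gr s) s.
Proof. by []. Qed.

Lemma gr_mono s : {in s &, forall x y, (gr s x < gr s y) = (x < y)}.
Proof.
move=> x y xs ys; rewrite /gr ltnS; case: (ltnP x y) => xy.
  apply: (count_lt (z := x)) => //=; last by rewrite ltnn.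
  move=> u /= ux; exact: ltn_trans xy.
apply/negbTE; rewrite -leqNgt; apply: sub_count => u /= uy; exact: leq_trans uy xy.
Qed.

Lemma red_map f s : {in s &, forall x y, (f x < f y) = (x < y)} -> red (map f s) = red s.
Proof.
move=> H; rewrite /red -map_comp; apply/eq_in_map => x xs /=; rewrite count_map.
congr S; apply: eq_in_count => y ys /=; exact: H.
Qed.

Lemma red_take m s : red (take m (red s)) = red (take m s).
Proof.
rewrite -[red s]/(map (gr s) s) -map_take red_map // => x y /mem_take xs /mem_take ys; exact: gr_mono.
Qed.

Lemma red_red s : red (red s) = red s.
Proof. by have := red_take (size s) s; rewrite take_size -(size_map (gr s)) -red_gr take_size. Qed.

Lemma uniq_is_perm n s : uniq s -> all (fun x => 1 <= x <= n) s -> size s = n -> is_perm n s.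
Proof.
move=> us /allP al sz; apply: uniq_perm => //; first exact: iota_uniq.
have H1 : {subset s <= iota 1 n}.
  move=> x /al /andP[h1 h2]; rewrite mem_iota; lia.
have H2 : size (iota 1 n) <= size s by rewrite size_iota sz.
exact: (uniq_min_size us H1 H2).2.
Qed.

Lemma red_is_perm s : uniq s -> is_perm (size s) (red s).
Proof.
move=> us; rewrite red_gr; apply: uniq_is_perm; last by rewrite size_map.
  rewrite map_inj_in_uniq // => x y xs ys e.
  have := gr_mono xs ys; have := gr_mono ys xs; rewrite e ltnn; lia.
apply/allP => _ /mapP[x xs ->]; rewrite /gr ltnS /= -(count_predT s).
apply: (count_lt (z := x)) => //=; by rewrite ltnn.
Qed.

Lemma count_iota_lt m n x : x <= m + n -> count (fun y => y < x) (iota m n) = x - m.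
Proof.
elim: n m => [|n IH] m /=; first by rewrite addn0 => h; lia.
move=> h; rewrite IH; last lia. case: (ltnP m x) => /=; lia.
Qed.

Lemma perm_count_lt n s x : is_perm n s -> x \in s -> count (fun y => y < x) s = x - 1.
Proof.
move=> ps xs; rewrite (permP ps) count_iota_lt //.
by move: xs; rewrite (perm_mem ps) mem_iota; lia.
Qed.

Lemma red_perm n s : is_perm n s -> red s = s.
Proof.
move=> ps; rewrite red_gr -[RHS]map_id; apply/eq_in_map => x xs.
rewrite /gr (perm_count_lt ps xs); move: xs; rewrite (perm_mem ps) mem_iota; lia.
Qed.

Definition unl a x := x - (a < x).
Definition lft a x := if a <= x then x.+1 else x.

Lemma red_behead_perm n a b : is_perm n (a :: b) -> red b = map (unl a) b.
Proof.
move=> ps; rewrite red_gr; apply/eq_in_map => x xb.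
have xs : x \in a :: b by rewrite inE xb orbT.
have := perm_count_lt ps xs; rewrite /= /gr /unl.
have : 1 <= x by move: xs; rewrite (perm_mem ps) mem_iota; lia.
case: (a < x) => /=; lia.
Qed.

Lemma del_pos1 s : del_pos [:: 1] s = behead s.
Proof.
case: s => [//|x s]; rewrite /del_pos /=.
suff H : forall j, 1 <= j -> mask [seq i.+1 \notin [:: 1] | i <- iota j (size s)] s = s.
  exact: H.
elim: s => [//|y s IH] j hj /=; rewrite inE.
have -> : (j.+1 == 1) = false by apply/eqP; lia.
by rewrite /= IH.
Qed.

Lemma contains_map f s pat : {in s &, forall x y, (f x < f y) = (x < y)} ->
  contains (map f s) pat -> contains s pat.
Proof.
move=> H [I [h1 h2 /allP h3 h4 h5]]; exists I; split => //.
- by apply/allP => i /h3; rewrite size_map.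
rewrite -h4.
have -> : [seq nth 0 [seq f i | i <- s] i | i <- I] = map f [seq nth 0 s i | i <- I].
  rewrite -map_comp; apply/eq_in_map => i /h3; rewrite size_map => hi /=.
  exact: nth_map.
rewrite (red_map (f := f)) // => x y /mapP[i /h3 hi ->] /mapP[j /h3 hj ->].
by apply: H; apply: mem_nth; rewrite -(size_map f).
Qed.

Lemma nth_succ_shift (I X : seq nat) :
  (forall x, x \in X -> nth 0 (map succn I) x = (nth 0 (map succn I) x.-1).+1) <->
  (forall x, x \in X -> nth 0 I x = (nth 0 I x.-1).+1).
Proof.
split=> H x /H.
  case: (ltnP x (size I)) => hx; last by rewrite nth_default ?size_map.
  have hx' : x.-1 < size I by lia.
  by rewrite !(nth_map 0) //; case.
case: (ltnP x (size I)) => hx; last by rewrite nth_default.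
have hx' : x.-1 < size I by lia.
by rewrite !(nth_map 0) // => ->.
Qed.

Lemma contains_behead a b pat : contains b pat -> contains (a :: b) pat.
Proof.
move=> [I [h1 h2 /allP h3 h4 h5]]; exists (map succn I); split.
- by rewrite size_map.
- by rewrite sorted_map.
- by apply/allP => _ /mapP[i /h3 hi ->].
- by rewrite -map_comp.
- exact/nth_succ_shift.
Qed.

Lemma path_first (I : seq nat) i0 : sorted ltn (i0 :: I) -> 0 \in i0 :: I -> i0 = 0.
Proof.
move=> /= hp; rewrite inE => /orP[/eqP->//|h].
by have /allP/(_ _ h) := order_path_min ltn_trans hp.
Qed.

Lemma take_iota_nth (s : seq nat) t : t <= size s -> take t s = map (nth 0 s) (iota 0 t).
Proof.
move=> ht; apply: (@eq_from_nth _ 0).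
  rewrite size_take size_map size_iota; case: (ltnP t (size s)) => h; lia.
move=> i; rewrite size_take => hi.
have hi' : i < t by move: hi; case: (ltnP t (size s)) => h1 h2; lia.
rewrite nth_take //.
rewrite (nth_map 0) ?size_iota; last lia.
by rewrite nth_iota //; lia.
Qed.

Lemma contains_cons a b sg : contains (a :: b) (sg, iota 1 (size sg).-1) ->
  contains b (sg, iota 1 (size sg).-1) \/
  (size sg <= (size b).+1 /\ red (take (size sg) (a :: b)) = sg).
Proof.
move=> [I [h1 h2 /allP h3 h4 h5]]; simpl in h1, h4, h5.
case: (boolP (0 \in I)) => h0.
  right.
  case: I h1 h2 h3 h4 h5 h0 => [//|i0 I'] h1 h2 h3 h4 h5 h0.
  have e0 := path_first h2 h0.
  have hI : forall x, x < size sg -> nth 0 (i0 :: I') x = x.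
    elim=> [|x IH] hx; first by rewrite e0.
    rewrite h5 ?mem_iota /=; last lia.
    by rewrite IH //; lia.
  have eI : i0 :: I' = iota 0 (size sg).
    apply: (@eq_from_nth _ 0); first by rewrite size_iota.
    by move=> x hx; rewrite hI -?h1 // nth_iota //; rewrite -h1.
  have hs0 : 0 < size sg by rewrite -h1.
  have hsz : size sg <= (size b).+1.
    have := h3 (nth 0 (i0 :: I') (size sg).-1); rewrite mem_nth; last by rewrite h1 /=; lia.
    by rewrite hI ?h1 /=; lia.
  split => //; rewrite take_iota_nth //; by rewrite -eI.
left; exists (map predn I).
have eI : I = map succn (map predn I).
  rewrite -map_comp -[LHS]map_id; apply/eq_in_map => i hi /=.
  have : i != 0 by apply: contraNneq h0 => <-.
  by case: i {hi}.
move: (map predn I) eI h1 h2 h3 h4 h5 => J -> {I h0} h1 h2 h3 h4 h5; split.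
- by move: h1; rewrite !size_map.
- by rewrite sorted_map in h2; apply: sub_sorted h2.
- apply/allP => i hi; have := h3 i.+1; rewrite mem_map //=; last exact: succn_inj.
  by move=> /(_ hi).
- by rewrite -map_comp in h4.
- exact/nth_succ_shift.
Qed.

Lemma dR1 s : dR [:: 1] s = red (behead s).
Proof. by rewrite /dR del_pos1. Qed.

Lemma dR1_red a w : dR [:: 1] (red (a :: w)) = red w.
Proof.
rewrite dR1 [red (a :: w)]red_gr /= (red_map (f := gr (a :: w))) // => x y xw yw; apply: gr_mono; by rewrite inE ?xw ?yw orbT.
Qed.

Lemma dRw1 a w : dRw [:: 1] (a :: w) = map (unl a) w.
Proof. by rewrite /dRw del_pos1 /=; apply: eq_map => x; rewrite addn0. Qed.

Lemma lft_unl a x : x != a -> lft a (unl a x) = x.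
Proof. rewrite /lft /unl => /eqP h; case: (ltnP a x) => h1 /=; case: ifP => /=; lia. Qed.

Lemma unl_lft a y : unl a (lft a y) = y.
Proof. rewrite /lft /unl; case: (leqP a y) => h1; case: ltnP => /=; lia. Qed.

Lemma lft_neq a y : lft a y != a.
Proof. rewrite /lft; case: leqP => h; apply/eqP; lia. Qed.

Lemma lft_mono a x y : (lft a x < lft a y) = (x < y).
Proof. rewrite /lft; case: (leqP a x); case: (leqP a y) => h1 h2; apply/idP/idP; lia. Qed.

Lemma avoids_red B a b : avoids B (a :: b) -> avoids B (red b).
Proof.
move=> H pat hp hc; apply: (H pat hp); apply: contains_behead.
apply: (contains_map (f := gr b)); first exact: gr_mono.
by rewrite -red_gr.
Qed.

Lemma perm_facts n s : is_perm n s -> [/\ uniq s, size s = n & forall x, x \in s -> 1 <= x <= n].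
Proof.
move=> ps; split.
- by rewrite (perm_uniq ps) iota_uniq.
- by rewrite (perm_size ps) size_iota.
- by move=> x; rewrite (perm_mem ps) mem_iota; lia.
Qed.

Theorem mainTheorem2 (t k : nat) (sigma p : seq nat) :
  is_perm t sigma -> is_perm k p ->
  red (take (minn t k) p) != red (take (minn t k) sigma) ->
  rev_deletable [:: (sigma, iota 1 t.-1)] p [:: 1].
Proof.
move=> Ps Pp Hne.
have [_ szs _] := perm_facts Ps.
have [_ szp _] := perm_facts Pp.
have k0 : 0 < k.
  case: k Pp szp Hne => // _ _ /negP[]; by rewrite minn0 !take0.
split=> //; split; first by rewrite /= szp; lia.
move=> n [|a w'] Hsz Hu /allP Hall Hred _; first by move: Hsz; rewrite szp /=; lia.
subst p; rewrite dR1_red dRw1 /=.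
have ha : 1 <= a <= n by apply: Hall; rewrite inE eqxx.
move: Hu => /= /andP[aw' uw'].
have hkn : (size w').+1 <= n.
  have := @uniq_leq_size _ (a :: w') (iota 1 n); rewrite size_iota /=; apply.
    by rewrite aw'.
  by move=> x /Hall; rewrite mem_iota; lia.
have szr : forall s, size (red s) = size s by move=> s; rewrite size_map.
have Hhead : forall pi, inS n [:: (sigma, iota 1 t.-1)] (red (a :: w')) (a :: w') pi ->
    pi = a :: behead pi.
  move=> pi [pp _ pre]; have [_ szpi _] := perm_facts pp.
  have := pre 1; rewrite szr /= => /(_ isT).
  by case: pi szpi {pp pre} => [|x pi'] /=; [lia | move=> _ ->].
split.
- move=> pi Hpi; rewrite dR1; have epi := Hhead _ Hpi.
  move: Hpi; rewrite epi; move: (behead pi) => b {epi pi} [pp av pre].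
  have [ub szb _] := perm_facts pp.
  move: ub => /= /andP[_ ub].
  split.
  + have := red_is_perm ub; rewrite /= in szb; rewrite -szb subn1 /=; by [].
  + exact: avoids_red av.
  + move=> i; rewrite szr => /andP[i1 i2].
    rewrite (red_behead_perm pp) !(nth_map 0); last 2 first.
      lia.
      rewrite /= in szb; lia.
    congr unl; case: i i1 i2 => [//|j] _ hj /=.
    have := pre j.+2; rewrite szr /= => -> //; lia.
- move=> pi1 pi2 H1 H2; rewrite !dR1 => e.
  rewrite (Hhead _ H1) (Hhead _ H2); congr cons.
  have e1 := Hhead _ H1; have e2 := Hhead _ H2.
  move: H1 H2 e; rewrite e1 e2 /=; move: (behead pi1) (behead pi2) => b1 b2 {e1 e2 pi1 pi2}.
  move=> [p1 _ _] [p2 _ _].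
  rewrite (red_behead_perm p1) (red_behead_perm p2) => e.
  have [u1 _ _] := perm_facts p1; have [u2 _ _] := perm_facts p2.
  move: u1 u2 => /= /andP[a1 _] /andP[a2 _].
  have K : forall b, a \notin b -> map (lft a) (map (unl a) b) = b.
    move=> b ab; rewrite -map_comp -[RHS]map_id; apply/eq_in_map => x xb /=.
    by apply: lft_unl; apply: contraNneq ab => <-.
  by rewrite -(K _ a1) e K.
- move=> tau [ptau avtau pretau].
  have [utau sztau intau] := perm_facts ptau.
  set pi := a :: map (lft a) tau.
  have prepi : forall i, 1 <= i <= size (red (a :: w')) -> nth 0 pi i.-1 = nth 0 (a :: w') i.-1.
    move=> i; rewrite szr /= => /andP[i1 i2].
    case: i i1 i2 => [//|[|j]] _ //= hj.
    rewrite (nth_map 0); last by rewrite sztau; lia.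
    rewrite (pretau j.+1); last by rewrite szr /=; lia.
    rewrite /= (nth_map 0); last lia.
    apply: lft_unl; apply: contraNneq aw' => <-; apply: mem_nth; exact: hj.
  have ppi : is_perm n pi.
    apply: uniq_is_perm.
    + rewrite /= map_inj_in_uniq ?utau ?andbT.
        by apply/mapP => [[y _ /eqP]]; rewrite eq_sym (negbTE (lft_neq a y)).
      by move=> x y _ _ e; rewrite -(unl_lft a x) e unl_lft.
    + apply/allP => x; rewrite inE => /orP[/eqP->//|/mapP[y /intau hy ->]].
      rewrite /lft; case: (leqP a y) => h /=; lia.
    + by rewrite /= size_map sztau; lia.
  exists pi; last by rewrite dR1 /= (red_map (f := lft a)) ?(red_perm ptau) // => x y _ _; exact: lft_mono.
  split => //.
  move=> pat; rewrite inE => /eqP -> hc.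
  have ht : t.-1 = (size sigma).-1 by rewrite szs.
  rewrite ht in hc.
  case: (contains_cons hc) => [hc'|[hsz hred]].
    apply: (avtau _ (mem_head _ _)); rewrite ht.
    apply: (contains_map (f := lft a)) => //; move=> x y _ _; exact: lft_mono.
  have etake : take (size (a :: w')) pi = a :: w'.
    have [_ szpi _] := perm_facts ppi.
    have hle : size (a :: w') <= size pi by rewrite szpi.
    apply: (@eq_from_nth _ 0); first by rewrite size_takel.
    move=> i; rewrite size_takel // => hi.
    rewrite nth_take // -[i]/(i.+1.-1) prepi //; rewrite szr; exact: hi.
  move: Hne; rewrite szs in hred.
  have ek : size (a :: w') = k by rewrite Hsz szp.
  case: (leqP t k) => htk.
    rewrite red_take.
    have -> : take t (a :: w') = take t pi by rewrite -etake ek take_takel.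
    rewrite hred -{1}szs take_size -hred red_red eqxx //.
  rewrite red_take -{1}ek take_size.
  rewrite -hred red_take take_takel ?ek; last exact: ltnW.
  by rewrite -ek etake eqxx.
Qed.
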